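(* There exists a RobMCF instance $(G,u,c,\boldsymbol b)$ with two scenarios and integral capacities (indeed $u\equiv 1$) such that no optimal solution of the continuous relaxation of the RobMCF problem is integral; i.e., the minimum cost over all real-valued robust $\boldsymbol b$-flows is strictly smaller than the minimum cost over all integral robust $\boldsymbol b$-flows.
   Context: A RobMCF instance $(G,u,c,\boldsymbol b)$ consists of a finite directed graph (parallel arcs allowed) $G=(V,A)$ whose arc set is partitioned as $A=A^{\mathrm{fix}}\cup A^{\mathrm{free}}$ into fixed and free arcs, capacities $u:A\to\mathbb Z_{\ge0}$, costs $c:A\to\mathbb Z_{\ge0}$, a finite nonempty set of scenarios $\Lambda$, and for each $\lambda\in\Lambda$ balances $b^\lambda:V\to\mathbb Z$ with $\sum_{v\in V}b^\lambda(v)=0$; $\boldsymbol b=(b^\lambda)_{\lambda\in\Lambda}$. A $b^\lambda$-flow is a function $f^\lambda:A\to\mathbb Z_{\ge0}$ with $f^\lambda(a)\le u(a)$ for all $a\in A$ and $\sum_{a=(v,w)\in A}f^\lambda(a)-\sum_{a=(w,v)\in A}f^\lambda(a)=b^\lambda(v)$ for all $v\in V$ (outflow minus inflow); its cost is $c(f^\lambda)=\sum_{a\in A}c(a)f^\lambda(a)$. A robust $\boldsymbol b$-flow is a tuple $\boldsymbol f=(f^\lambda)_{\lambda\in\Lambda}$ of $b^\lambda$-flows with $f^\lambda(a)=f^{\lambda'}(a)$ for all $a\in A^{\mathrm{fix}}$ and all $\lambda,\lambda'\in\Lambda$ (consistent flow constraints); its cost is $c(\boldsymbol f)=\max_{\lambda\in\Lambda}c(f^\lambda)$.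 The RobMCF problem asks for a robust $\boldsymbol b$-flow of minimum cost (an optimal robust $\boldsymbol b$-flow). The continuous relaxation is the same problem where the flows $f^\lambda$ may take values in $\mathbb R_{\ge 0}$ instead of $\mathbb Z_{\ge0}$. *)

(* Defs.v *)
From HB Require Import structures.
From mathcomp Require Import all_boot all_order all_algebra.
From mathcomp Require Import reals.
Set Implicit Arguments. Unset Strict Implicit. Unset Printing Implicit Defensive.
Import Order.TTheory GRing.Theory Num.Theory.
Local Open Scope ring_scope.

(* A RobMCF instance: directed multigraph (arcs A with tail/head, so parallel
   arcs are allowed), fixed arcs, capacities, costs, scenarios, balances. *)
Record instance := Instance {
  V : finType;
  A : finType;
  tail : A -> V;
  head : A -> V;
  fixed : pred A;            (* A^fix; A^free is its complement *)
  cap : A -> nat;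
  cost : A -> nat;
  Sc : finType;
  bal : Sc -> V -> int
}.

Definition valid (I : instance) : Prop :=
  (0 < #|Sc I|)%N /\ forall l : Sc I, \sum_(v : V I) bal l v = 0.

Section Flows.
Variables (R : realType) (I : instance).

Definition is_bflow (l : Sc I) (f : A I -> R) : Prop :=
  (forall a, 0 <= f a <= (cap a)%:R) /\
  forall v : V I,
    \sum_(a : A I | tail a == v) f a - \sum_(a : A I | head a == v) f a
      = (bal l v)%:~R.

Definition robust_flow (f : Sc I -> A I -> R) : Prop :=
  (forall l, is_bflow l (f l)) /\
  forall (a : A I) (l l' : Sc I), fixed a -> f l a = f l' a.

Definition integral_flow (f : Sc I -> A I -> R) : Prop :=
  forall l a, f l a \is a Num.int.

Definition flow_cost (g : A I -> R) : R := \sum_(a : A I) (cost a)%:R * g a.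

(* c(f) = max over scenarios (costs are nonnegative, so 0 is a neutral start). *)
Definition robust_cost (f : Sc I -> A I -> R) : R :=
  \big[Num.max/0]_(l : Sc I) flow_cost (f l).

End Flows.

(* Main.v *)
Require Import Defs.
From HB Require Import structures.
From mathcomp Require Import all_boot all_order all_algebra.
From mathcomp Require Import reals.
From mathcomp Require Import lra zify.
Import Order.TTheory GRing.Theory Num.Theory.
Local Open Scope ring_scope.

Definition a0 : 'I_3 := @Ordinal 3 0 isT.
Definition a1 : 'I_3 := @Ordinal 3 1 isT.
Definition a2 : 'I_3 := @Ordinal 3 2 isT.

Lemma sum3 (Z : nmodType) (F : 'I_3 -> Z) :
  \sum_(a < 3) F a = F a0 + F a1 + F a2.
Proof.
rewrite !big_ord_recl big_ord0 addr0 addrA.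
by congr (_ + _ + _); apply: f_equal; apply/val_inj.
Qed.

Lemma bmax (R : realType) (F : bool -> R) :
  \big[Num.max/0]_(l : bool) F l = Num.max (F true) (Num.max (F false) 0).
Proof. by rewrite unlock /reducebig /index_enum /= !unlock /=. Qed.

Definition Inst : instance :=
  @Instance bool (ordinal 3)
    (fun a => val a != 2%N) (fun a => val a == 2%N)
    (fun a => val a == 0%N) (fun _ => 1%N)
    (fun a => if val a == 0%N then 0%N else 1%N) bool
    (fun l v => if l then (if v then 1 else -1) else 0).

Lemma consE (R : realType) (h : 'I_3 -> R) (v : bool) :
  \sum_(a : A Inst | Defs.tail a == v) h a - \sum_(a : A Inst | Defs.head a == v) h a
  = if v then h a0 + h a1 - h a2 else h a2 - h a0 - h a1.
Proof.
rewrite big_mkcond [X in _ - X]big_mkcond /= !sum3 /=.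
by case: v => /=; rewrite ?add0r ?addr0 ?sub0r ?subr0 //; lra.
Qed.

Lemma costE (R : realType) (h : 'I_3 -> R) :
  flow_cost (I := Inst) h = h a1 + h a2.
Proof. by rewrite /flow_cost sum3 /= mul0r !mul1r add0r. Qed.

Theorem mainTheorem1 (R : realType) :
  exists I : instance,
    valid I /\ #|Sc I| = 2%N /\ (forall a : A I, cap a = 1%N) /\
    exists f : Sc I -> A I -> R,
      robust_flow f /\
      (forall f' : Sc I -> A I -> R, robust_flow f' -> robust_cost f <= robust_cost f') /\
      exists g : Sc I -> A I -> R,
        robust_flow g /\ integral_flow g /\
        (forall g' : Sc I -> A I -> R, robust_flow g' -> integral_flow g' ->
           robust_cost g <= robust_cost g') /\
        robust_cost f < robust_cost g.
Proof.
exists Inst.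
split.
  split; first by rewrite card_bool.
  by case=> /=; rewrite unlock /reducebig /index_enum /= !unlock /=.
split; first by rewrite card_bool.
split; first by [].
have key : forall h : Sc Inst -> A Inst -> R, robust_flow h ->
   [/\ flow_cost (h true) >= 1 - h true a0, flow_cost (h false) >= h true a0,
       0 <= h true a0 <= 1 &
       flow_cost (h true) <= robust_cost h /\ flow_cost (h false) <= robust_cost h].
  move=> h [Hb Hfix].
  have [[B1 C1] [B0 C0]] := (Hb true, Hb false).
  have E1 := C1 true; have E0 := C0 true.
  rewrite consE /= in E1; rewrite consE /= in E0.
  have Hx : h false a0 = h true a0 by apply: Hfix.
  have := B1 a2; have := B1 a1; have := B0 a2; have := B0 a1; have := B1 a0.
  rewrite /robust_cost bmax !costE.
  rewrite Hx in E0.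
  move=> /andP[p0 q0] /andP[p1 _] /andP[p2 _] /andP[p3 _] /andP[p4 _].
  split; [lra | lra | by apply/andP | split].
  - by rewrite le_max lexx.
  - by rewrite le_max le_max lexx orbT.
pose f : Sc Inst -> A Inst -> R := fun (l : bool) (a : 'I_3) =>
  if val a == 0%N then 2^-1 else if l then (if val a == 1%N then 2^-1 else 0)
  else (if val a == 2%N then 2^-1 else 0) : R.
pose g : Sc Inst -> A Inst -> R := fun (l : bool) (a : 'I_3) =>
  if l && (val a == 1%N) then 1 else 0 : R.
have cf : robust_cost f = 2^-1.
  rewrite /robust_cost bmax !costE /f /= addr0 add0r.
  have H2 : (0:R) <= 2^-1 by rewrite invr_ge0 ler0n.
  by rewrite (max_idPl H2) maxxx.
have cg : robust_cost g = 1.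
  rewrite /robust_cost bmax !costE /g /= !addr0.
  by rewrite maxxx (max_idPl (@ler01 R)).
exists f; split.
  split; last by move=> a l l'; rewrite /f /= => /eqP ->.
  move=> l; split.
    move=> a; rewrite /f.
    have h1 : (0 : R) <= 2^-1 by rewrite invr_ge0 ler0n.
    have h2 : (2^-1 : R) <= 1 by rewrite invf_le1 ?ler1n // ltr0n.
    have h3 : (0 : R) <= 1 by [].
    by case: ifP => _; [|case: l; case: ifP => _]; rewrite /= ?h1 ?h2 ?lexx ?h3.
  move=> v; rewrite consE /f /=.
  by case: l; case: v => /=; lra.
split.
  move=> f' /key [H1 H0 _ [M1 M0]]; rewrite cf.
  case: (lerP 2^-1 (f' true a0)) => [Hl | Hl].
  - by apply: le_trans M0; apply: le_trans H0.
  - apply: le_trans M1; apply: le_trans H1; lra.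
exists g; split.
  split; last by move=> a l l'; rewrite /g /= => /eqP ->; rewrite !andbF.
  move=> l; split.
    by move=> a; rewrite /g; case: ifP => _; rewrite ?lexx ?ler01.
  move=> v; rewrite consE /g /=.
  by case: l; case: v => /=; lra.
split.
  by move=> l a; rewrite /g; case: ifP => _; rewrite ?rpred0 ?rpred1.
split.
  move=> g' /key [H1 H0 /andP[y0 y1] [M1 M0]] Hint; rewrite cg.
  have := Hint true a0; move/intrP=> [m Hm].
  rewrite Hm in H1 H0 y0 y1.
  rewrite ler0z in y0; rewrite lerz1 in y1.
  have : (m = 0) \/ (m = 1) by lia.
  case=> Em; rewrite Em in H1 H0.
  - by apply: le_trans M1; apply: le_trans H1; rewrite subr0.
  - by apply: le_trans M0; apply: le_trans H0.
by rewrite cf cg invf_lt1 ?ltr0n // ltr1n.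
Qed.
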